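(* Let $(L,|\cdot|)$ be a complete field with a nontrivial discrete non-Archimedean absolute value. Let $\mathcal{T}$ be the set of closed balls $\overline{B(z_0,r)}=\{z\in L:|z-z_0|\le r\}$ with $z_0\in L$ and $r\in|L^*|\cup\{0\}$ (so $L\subset\mathcal T$ via $z\mapsto\overline{B(z,0)}$), endowed with (i) the weak topology, the weakest topology making all maps $x\mapsto|Q(x)|:=\sup_{z\in x}|Q(z)|$ continuous for $Q\in L[T]$, and (ii) the strong topology, induced by the distance $d(x,x')=\max\{|\mathrm{diam}(x\vee x')-\mathrm{diam}(x)|,|\mathrm{diam}(x\vee x')-\mathrm{diam}(x')|\}$, where $\mathrm{diam}(x)=\sup_{z,z'\in x}|z-z'|$ and $x\vee x'$ is the smallest closed ball containing $x$ and $x'$. Let $F\subset L$ be a bounded infinite subset. Then either (1) the weak closure of $F$ in $\mathcal T$ is compact for the strong topology; or (2) there exists a closed ball $x\in\mathcal T$ of positive radius containing infinitely many points $x_n\in F$ such that $x_n\to x$ in the weak topology.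
   Context: Bounded means $\sup_{z\in F}|z|<\infty$. The restriction of $d$ to $L$ is the distance $|z-z'|$. *)

(* Defs.v *)
From HB Require Import structures.
From Stdlib Require Import ClassicalEpsilon.
From mathcomp Require Import all_boot all_order all_algebra.
From mathcomp Require Import all_classical all_reals.
Set Implicit Arguments. Unset Strict Implicit. Unset Printing Implicit Defensive.
Import Order.TTheory GRing.Theory Num.Theory.
Local Open Scope classical_set_scope.
Local Open Scope ring_scope.

Section Berkovich.
Variables (K : fieldType) (R : realType) (abs : K -> R).

Record complete_discrete_nonarch_abs : Prop := {
  abs_ge0 : forall x, 0 <= abs x;
  abs_eq0 : forall x, (abs x = 0) <-> (x = 0);
  absM : forall x y, abs (x * y) = abs x * abs y;
  abs_ultra : forall x y, abs (x + y) <= Num.max (abs x) (abs y);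
  abs_nontrivial : exists x, x != 0 /\ abs x != 1;
  (* discreteness: the value group |K^*| is a discrete subgroup of R_{>0}
     (1 is isolated in it) *)
  abs_discrete : exists e : R, 0 < e /\
     forall x, x != 0 -> abs x != 1 -> e <= `|abs x - 1|;
  abs_complete : forall u : nat -> K,
     (forall e : R, 0 < e -> exists N, forall m n, (N <= m)%N -> (N <= n)%N ->
        abs (u m - u n) < e) ->
     exists l, forall e : R, 0 < e -> exists N, forall n, (N <= n)%N ->
        abs (u n - l) < e
}.

Definition radius_set (r : R) : Prop := r = 0 \/ exists a : K, a != 0 /\ abs a = r.

Definition cball (z0 : K) (r : R) : set K := [set z | abs (z - z0) <= r].

Definition is_ball (x : set K) : Prop :=
  exists z0 r, radius_set r /\ x = cball z0 r.

Definition Tball := {x : set K | is_ball x}.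

Lemma is_ball_pt (z : K) : is_ball (cball z 0).
Proof. by exists z, 0; split => //; left. Qed.

Definition pt (z : K) : Tball := exist _ (cball z 0) (is_ball_pt z).

Definition normQ (Q : {poly K}) (x : Tball) : R :=
  sup [set abs Q.[z] | z in sval x].

Definition diam (x : set K) : R :=
  sup [set t | exists z z', x z /\ x z' /\ t = abs (z - z')].

Definition join (x x' : set K) : set K :=
  epsilon (inhabits set0) (fun y => is_ball y /\ x `<=` y /\ x' `<=` y /\
    forall y', is_ball y' -> x `<=` y' -> x' `<=` y' -> y `<=` y').

Definition dist (x x' : Tball) : R :=
  let J := join (sval x) (sval x') in
  Num.max `|diam J - diam (sval x)| `|diam J - diam (sval x')|.

(* weak topology: weakest topology making all x ↦ |Q(x)| continuous;
   U is open iff around each of its points it contains a basic open set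
   {y | |normQ Q y - normQ Q x| < e for Q in a finite list} *)
Definition weak_open (U : set Tball) : Prop :=
  forall x, U x -> exists (Qs : seq {poly K}) (e : R), 0 < e /\
    forall y, (forall Q, Q \in Qs -> `|normQ Q y - normQ Q x| < e) -> U y.

Definition strong_open (U : set Tball) : Prop :=
  forall x, U x -> exists e : R, 0 < e /\ forall y, dist x y < e -> U y.

End Berkovich.

Section Topo.
Variable (T : Type) (op : set (set T)).

Definition closure_of (A : set T) : set T :=
  [set x | forall U, op U -> U x -> exists y, A y /\ U y].

Definition compact_for (A : set T) : Prop :=
  forall (I : Type) (U : I -> set T), (forall i, op (U i)) ->
    A `<=` \bigcup_i U i ->
    exists D : set I, finite_set D /\ A `<=` \bigcup_(i in D) U i.

Definition converges_for (u : nat -> T) (x : T) : Prop :=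
  forall U, op U -> U x -> exists N, forall n, (N <= n)%N -> U (u n).
End Topo.

(* Main.v *)
Require Import Defs.
From HB Require Import structures.
From mathcomp Require Import all_boot all_order all_algebra.
From mathcomp Require Import all_classical all_reals.
From Stdlib Require Import ClassicalEpsilon.
From mathcomp Require Import ring lra.
Import Order.TTheory GRing.Theory Num.Theory.
Local Open Scope classical_set_scope.
Local Open Scope ring_scope.
Set Implicit Arguments. Unset Strict Implicit.

Lemma abs0 (K : fieldType) (R : realType) (abs : K -> R)
  (H : complete_discrete_nonarch_abs abs) : abs 0 = 0.
Proof. exact/(abs_eq0 H). Qed.

Lemma abs1 (K : fieldType) (R : realType) (abs : K -> R)
  (H : complete_discrete_nonarch_abs abs) : abs 1 = 1.
Proof.
have h := absM H 1 1; rewrite mulr1 in h.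
have h0 : abs 1 != 0 by apply/eqP => /(abs_eq0 H) /eqP; rewrite oner_eq0.
by apply: (mulfI h0); rewrite -h mulr1.
Qed.

Lemma absN (K : fieldType) (R : realType) (abs : K -> R)
  (H : complete_discrete_nonarch_abs abs) x : abs (- x) = abs x.
Proof.
have h1 : abs (-1) = 1.
  have h := absM H (-1) (-1); rewrite mulrNN mulr1 (abs1 H) in h.
  have g := abs_ge0 H (-1).
  have : (abs (-1) - 1) * (abs (-1) + 1) = 0 by rewrite -subr_sqr expr2 -h expr1n subrr.
  move/eqP; rewrite mulf_eq0 => /orP[/eqP|/eqP]; lra.
by rewrite -mulN1r absM // h1 mul1r.
Qed.

Lemma absB (K : fieldType) (R : realType) (abs : K -> R)
  (H : complete_discrete_nonarch_abs abs) x y : abs (x - y) = abs (y - x).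
Proof. by rewrite -(absN H) opprB. Qed.

Lemma abs_gt0 (K : fieldType) (R : realType) (abs : K -> R)
  (H : complete_discrete_nonarch_abs abs) x : x != 0 -> 0 < abs x.
Proof.
move=> xn0; rewrite lt_def abs_ge0 // andbT; apply/eqP => /(abs_eq0 H) /eqP.
by rewrite (negbTE xn0).
Qed.

Lemma absV (K : fieldType) (R : realType) (abs : K -> R)
  (H : complete_discrete_nonarch_abs abs) x : x != 0 -> abs x^-1 = (abs x)^-1.
Proof.
move=> xn0; have h := absM H x x^-1; rewrite mulfV // (abs1 H) in h.
have g : abs x != 0 by rewrite gt_eqF // abs_gt0.
by apply: (mulfI g); rewrite -h mulfV.
Qed.

Lemma ultraD (K : fieldType) (R : realType) (abs : K -> R)
  (H : complete_discrete_nonarch_abs abs) x y c :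
  abs x <= c -> abs y <= c -> abs (x + y) <= c.
Proof.
move=> hx hy; apply: le_trans (abs_ultra H x y) _.
by rewrite ge_max hx hy.
Qed.

Lemma ultra3 (K : fieldType) (R : realType) (abs : K -> R)
  (H : complete_discrete_nonarch_abs abs) x y z c :
  abs (x - y) <= c -> abs (y - z) <= c -> abs (x - z) <= c.
Proof.
move=> h1 h2; have -> : x - z = (x - y) + (y - z) by rewrite addrA subrK.
exact: ultraD.
Qed.

Lemma abs_triangle (K : fieldType) (R : realType) (abs : K -> R)
  (H : complete_discrete_nonarch_abs abs) x y : abs (x + y) <= abs x + abs y.
Proof.
apply: le_trans (abs_ultra H x y) _.
have := abs_ge0 H x; have := abs_ge0 H y.
rewrite ge_max; move=> *; apply/andP; split; lra.
Qed.

Lemma abs_dist (K : fieldType) (R : realType) (abs : K -> R)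
  (H : complete_discrete_nonarch_abs abs) x y : `|abs x - abs y| <= abs (x - y).
Proof.
rewrite ler_norml; have h1 := abs_triangle H (x - y) y.
have h2 := abs_triangle H (y - x) x.
rewrite subrK in h1; rewrite subrK (absB H) in h2.
apply/andP; split; lra.
Qed.

Lemma abs_disc (K : fieldType) (R : realType) (abs : K -> R)
  (H : complete_discrete_nonarch_abs abs) : exists e : R, 0 < e /\ e < 1 /\
  forall a b, b != 0 -> abs a < abs b -> abs a <= (1 - e) * abs b.
Proof.
have [e [e0 He]] := abs_discrete H.
have [x [xn0 x1]] := abs_nontrivial H.
have gen : forall y, y != 0 -> abs y < 1 -> e <= 1 - abs y.
  move=> y yn0 y1; have := He y yn0; rewrite lt_eqF // => /(_ isT).
  by rewrite ltr0_norm ?subr_lt0 // opprB.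
have e1 : e < 1.
  have ax := abs_gt0 H xn0.
  have [xl|xg] := ltP (abs x) 1.
    have := gen x xn0 xl; lra.
  have xg' : 1 < abs x by rewrite lt_neqAle eq_sym x1.
  have ixn0 : x^-1 != 0 by rewrite invr_eq0.
  have hv : abs x^-1 < 1 by rewrite (absV H) // invf_lt1.
  have := gen _ ixn0 hv; have := abs_gt0 H ixn0; lra.
exists e; split => //; split => //.
move=> a b bn0 ab.
have [->|an0] := eqVneq a 0.
  rewrite (abs0 H); apply: mulr_ge0; last exact: (abs_ge0 H b).
  lra.
have bp := abs_gt0 H bn0.
have qn0 : a / b != 0 by rewrite mulf_neq0 // invr_eq0.
have hq : abs (a / b) = abs a / abs b by rewrite absM // absV.
have q1 : abs (a / b) < 1 by rewrite hq ltr_pdivrMr // mul1r.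
have := gen _ qn0 q1; rewrite hq => h.
have : abs a / abs b <= 1 - e by lra.
by rewrite ler_pdivrMr.
Qed.

Lemma sup_eq_max (R : realType) (S : set R) m :
  S m -> (forall t, S t -> t <= m) -> sup S = m.
Proof.
move=> Sm ub; apply/eqP; rewrite eq_le; apply/andP; split.
  by apply: ge_sup; [exists m | apply/ubP].
have hs : has_sup S by split; [exists m | exists m; apply/ubP].
exact: (sup_upper_bound hs).
Qed.

Lemma cball0P (K : fieldType) (R : realType) (abs : K -> R)
  (H : complete_discrete_nonarch_abs abs) w z : abs (w - z) <= 0 -> w = z.
Proof.
move=> h; have h0 : abs (w - z) = 0 by apply/eqP; rewrite eq_le h abs_ge0.
by move/(abs_eq0 H)/eqP: h0; rewrite subr_eq0 => /eqP.
Qed.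

Lemma normQ_pt (K : fieldType) (R : realType) (abs : K -> R)
  (H : complete_discrete_nonarch_abs abs) Q (y : Tball abs) z :
  sval y = cball abs z 0 -> normQ Q y = abs Q.[z].
Proof.
move=> hy; rewrite /normQ hy; apply: sup_eq_max.
  by exists z => //; rewrite /cball /= subrr (abs0 H).
by move=> t [w /= hw <-]; rewrite (cball0P H hw).
Qed.

Lemma normQ_X (K : fieldType) (R : realType) (abs : K -> R)
  (H : complete_discrete_nonarch_abs abs) (y : Tball abs) z0 (a c : K) :
  sval y = cball abs z0 (abs a) -> abs (c - z0) <= abs a ->
  normQ ('X - c%:P) y = abs a.
Proof.
move=> hy hc; rewrite /normQ hy; apply: sup_eq_max.
  exists (c + a); last by rewrite hornerXsubC addrC addKr.
  rewrite /cball /= addrAC; exact: (ultraD H hc (lexx _)).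
move=> t [w /= hw <-]; rewrite hornerXsubC.
by apply: (ultra3 H hw); rewrite (absB H).
Qed.

Lemma join_spec (K : fieldType) (R : realType) (abs : K -> R) (x x' : set K) :
  (exists y, is_ball abs y /\ x `<=` y /\ x' `<=` y /\
    forall y', is_ball abs y' -> x `<=` y' -> x' `<=` y' -> y `<=` y') ->
  let J := join abs x x' in
  is_ball abs J /\ x `<=` J /\ x' `<=` J /\
    forall y', is_ball abs y' -> x `<=` y' -> x' `<=` y' -> J `<=` y'.
Proof.
move=> h; rewrite /join.
exact: (epsilon_spec (inhabits set0) (fun y => is_ball abs y /\ x `<=` y /\ x' `<=` y /\
    forall y', is_ball abs y' -> x `<=` y' -> x' `<=` y' -> y `<=` y') h).
Qed.

Lemma dist_pt (K : fieldType) (R : realType) (abs : K -> R)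
  (H : complete_discrete_nonarch_abs abs) (x y : Tball abs) a b :
  sval x = cball abs a 0 -> sval y = cball abs b 0 -> dist x y = abs (a - b).
Proof.
move=> hx hy; rewrite /dist hx hy.
set J := join abs (cball abs a 0) (cball abs b 0).
have hJ : is_ball abs J /\ cball abs a 0 `<=` J /\ cball abs b 0 `<=` J /\
   forall y', is_ball abs y' -> cball abs a 0 `<=` y' -> cball abs b 0 `<=` y' -> J `<=` y'.
  apply: join_spec; exists (cball abs a (abs (a - b))).
  split.
    exists a, (abs (a - b)); split => //.
    have [->|abn] := eqVneq a b; first by left; rewrite subrr (abs0 H).
    by right; exists (a - b); rewrite subr_eq0.
  split.
    by move=> z /(cball0P H) ->; rewrite /cball /= subrr (abs0 H) abs_ge0.
  split.
    by move=> z /(cball0P H) ->; rewrite /cball /= (absB H).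
  move=> y' [z1 [r1 [_ ->]]] sa sb z hz.
  have ha : abs (a - z1) <= r1 by apply: sa; rewrite /cball /= subrr (abs0 H).
  have hb : abs (b - z1) <= r1 by apply: sb; rewrite /cball /= subrr (abs0 H).
  have hab : abs (a - b) <= r1 by apply: (ultra3 H ha); rewrite (absB H).
  rewrite /cball /=; exact: (ultra3 H (le_trans hz hab) ha).
have [_ [sa [sb mn]]] := hJ.
have sub : J `<=` cball abs a (abs (a - b)).
  apply: mn.
  - exists a, (abs (a - b)); split => //.
    have [->|abn] := eqVneq a b; first by left; rewrite subrr (abs0 H).
    by right; exists (a - b); rewrite subr_eq0.
  - by move=> z /(cball0P H) ->; rewrite /cball /= subrr (abs0 H) abs_ge0.
  - by move=> z /(cball0P H) ->; rewrite /cball /= (absB H).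
have Ja : J a by apply: sa; rewrite /cball /= subrr (abs0 H).
have Jb : J b by apply: sb; rewrite /cball /= subrr (abs0 H).
have dJ : diam abs J = abs (a - b).
  apply: sup_eq_max; first by exists a; exists b.
  move=> t [z [z' [hz [hz' ->]]]].
  have h1 := sub _ hz; have h2 := sub _ hz'; rewrite /cball /= in h1 h2.
  by apply: (ultra3 H h1); rewrite (absB H).
have d0 : forall c, diam abs (cball abs c 0) = 0.
  move=> c; apply: sup_eq_max.
    by exists c, c; rewrite /cball /= subrr (abs0 H) lexx.
  by move=> t [z [z' [/(cball0P H) -> [/(cball0P H) -> ->]]]]; rewrite subrr (abs0 H).
by rewrite dJ !d0 subr0 maxxx ger0_norm // abs_ge0.
Qed.

Lemma list_delta (T : eqType) (R : realType) (P : T -> R -> Prop) (s : seq T) :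
  (forall x d d', P x d -> 0 < d' -> d' <= d -> P x d') ->
  (forall x, x \in s -> exists d, 0 < d /\ P x d) ->
  exists d, 0 < d /\ forall x, x \in s -> P x d.
Proof.
move=> mono; elim: s => [|a s IH] h; first by exists 1; split.
have [da [da0 Pa]] := h a (mem_head _ _).
have [d [d0 Pd]] := IH (fun x xs => h x (ltac:(by rewrite in_cons xs orbT))).
exists (Num.min da d); split; first by rewrite lt_min da0 d0.
move=> x; rewrite in_cons => /orP[/eqP ->|xs].
  by apply: mono Pa _ _; rewrite ?lt_min ?da0 ?d0 // ge_min lexx.
by apply: mono (Pd _ xs) _ _; rewrite ?lt_min ?da0 ?d0 // ge_min lexx orbT.
Qed.

Definition basic (K : fieldType) (R : realType) (abs : K -> R)
  (Qs : seq {poly K}) (y0 : Tball abs) (e : R) : set (Tball abs) :=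
  [set y | forall Q, Q \in Qs -> `|normQ Q y - normQ Q y0| < e].

Lemma basic_open (K : fieldType) (R : realType) (abs : K -> R) Qs (y0 : Tball abs) e :
  weak_open (basic Qs y0 e).
Proof.
move=> y hy.
pose P := fun (Q : {poly K}) (d : R) => forall y' : Tball abs, `|normQ Q y' - normQ Q y| < d ->
   `|normQ Q y' - normQ Q y0| < e.
have mono : forall Q d d', P Q d -> 0 < d' -> d' <= d -> P Q d'.
  by move=> Q d d' h d'0 dd y' hy'; apply: h; exact: lt_le_trans hy' dd.
have hper : forall Q, Q \in Qs -> exists d, 0 < d /\ P Q d.
  move=> Q hQ; exists (e - `|normQ Q y - normQ Q y0|); split.
    by rewrite subr_gt0; exact: hy.
  move=> y' hy'; apply: le_lt_trans (ler_distD (normQ Q y) _ _) _; lra.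
have [d [d0 hd]] := list_delta mono hper.
exists Qs, d; split => // y' hy' Q hQ; apply: hd => //; exact: hy'.
Qed.

Lemma poly_lip (K : fieldType) (R : realType) (abs : K -> R)
  (H : complete_discrete_nonarch_abs abs) (Q : {poly K}) l :
  exists C, 0 <= C /\ forall z, abs (z - l) <= 1 -> abs (Q.[z] - Q.[l]) <= C * abs (z - l).
Proof.
elim/poly_ind: Q => [|p c [C [C0 hC]]].
  by exists 0; split => // z _; rewrite !horner0 subrr (abs0 H) mul0r.
exists (C * (1 + abs l) + abs p.[l]); split.
  by apply: addr_ge0; [apply: mulr_ge0 => //; have := abs_ge0 H l; lra|exact: abs_ge0].
move=> z hz; rewrite !hornerE.
have -> : p.[z] * z + c - (p.[l] * l + c) = (p.[z] - p.[l]) * z + p.[l] * (z - l).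
  by ring.
apply: le_trans (abs_triangle H _ _) _; rewrite !(absM H).
have hzl : abs z <= 1 + abs l.
  by have := abs_triangle H (z - l) l; rewrite subrK; lra.
have h1 := hC z hz.
have g1 := abs_ge0 H (p.[z] - p.[l]); have g2 := abs_ge0 H z; have g3 := abs_ge0 H (z - l).
have g4 := abs_ge0 H p.[l]; have g5 := abs_ge0 H l.
have : abs (p.[z] - p.[l]) * abs z <= C * abs (z - l) * (1 + abs l).
  by apply: ler_pM => //; lra.
nra.
Qed.

Lemma Fbar_in_C (K : fieldType) (R : realType) (abs : K -> R)
  (H : complete_discrete_nonarch_abs abs) (F : set K) l :
  (forall eps : R, 0 < eps -> exists f, F f /\ abs (f - l) < eps) ->
  closure_of (@weak_open K R abs) (pt abs @` F) (pt abs l).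
Proof.
move=> hl U hU Ul; have [Qs [e [e0 hQ]]] := hU _ Ul.
pose P := fun (Q : {poly K}) (d : R) => forall z, abs (z - l) < d ->
   `|abs Q.[z] - abs Q.[l]| < e.
have mono : forall Q d d', P Q d -> 0 < d' -> d' <= d -> P Q d'.
  by move=> Q d d' h d'0 dd z hz; apply: h; exact: lt_le_trans hz dd.
have hper : forall Q, Q \in Qs -> exists d, 0 < d /\ P Q d.
  move=> Q _; have [C [C0 hC]] := poly_lip H Q l.
  exists (Num.min 1 (e / (C + 1))); split.
    by rewrite lt_min ltr01 /= divr_gt0 //; lra.
  move=> z; rewrite lt_min => /andP[z1 ze].
  apply: le_lt_trans (abs_dist H _ _) _.
  apply: le_lt_trans (hC z (ltW z1)) _.
  have g := abs_ge0 H (z - l).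
  have : (C + 1) * abs (z - l) < e by rewrite mulrC -ltr_pdivlMr //; lra.
  nra.
have [d [d0 hd]] := list_delta mono hper.
have [f [Ff hf]] := hl d d0.
exists (pt abs f); split; first by exists f.
apply: hQ => Q hQin; rewrite (@normQ_pt _ _ _ H Q (pt abs f) f erefl) (@normQ_pt _ _ _ H Q (pt abs l) l erefl).
exact: hd.
Qed.

Lemma C_pt_Fbar (K : fieldType) (R : realType) (abs : K -> R)
  (H : complete_discrete_nonarch_abs abs) (F : set K) (y : Tball abs) l :
  closure_of (@weak_open K R abs) (pt abs @` F) y -> sval y = cball abs l 0 ->
  forall eps : R, 0 < eps -> exists f, F f /\ abs (f - l) < eps.
Proof.
move=> hC hy eps e0.
have [y' [[f Ff <-] hf]] := hC _ (@basic_open _ _ abs [:: 'X - l%:P] y eps)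
   (fun Q _ => ltac:(by rewrite subrr normr0)).
exists f; split => //; have := hf _ (mem_head _ _).
rewrite (@normQ_pt _ _ _ H _ (pt abs f) f erefl) (normQ_pt H _ hy) !hornerXsubC subrr (abs0 H) subr0.
by rewrite ger0_norm // abs_ge0.
Qed.

Lemma claim (K : fieldType) (R : realType) (abs : K -> R)
  (H : complete_discrete_nonarch_abs abs) (u : nat -> K) z0 r
  (hin : forall n, abs (u n - z0) <= r)
  (hsep : forall m n, m != n -> abs (u m - u n) = r) :
  forall L : seq nat, uniq L -> forall Q : {poly K}, (size Q <= size L)%N ->
  forall w, abs (w - z0) <= r ->
  Q.[w] = 0 \/ exists n, n \in L /\ abs Q.[w] <= abs Q.[u n].
Proof.
elim => [|a L IH] /=.
  move=> _ Q; rewrite leqn0 size_poly_eq0 => /eqP -> w _; left; exact: horner0.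
move=> /andP[aL uL] Q sQ w hw.
set Q1 := Q %/ ('X - (u a)%:P).
have hQ : Q = Q1 * ('X - (u a)%:P) + (Q.[u a])%:P.
  by rewrite {1}(divp_eq Q ('X - (u a)%:P)) modp_XsubC.
have ev : forall x, Q.[x] = Q1.[x] * (x - u a) + Q.[u a].
  by move=> x; rewrite {1}hQ !hornerE.
have sQ1 : (size Q1 <= size L)%N.
  rewrite /Q1 size_divp ?polyXsubC_eq0 // size_XsubC /=.
  by rewrite leq_subLR add1n.
case: (IH uL Q1 sQ1 w hw) => [h0 | [v [vL hv]]].
  by right; exists a; split; [exact: mem_head | rewrite ev h0 mul0r add0r].
right.
have va : v != a by apply/eqP => e; move: aL; rewrite -e vL.
have hwa : abs (w - u a) <= r by apply: (ultra3 H hw); rewrite (absB H).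
have key : abs Q.[w] <= Num.max (abs Q.[u v]) (abs Q.[u a]).
  rewrite ev; apply: (ultraD H); last by rewrite le_max lexx orbT.
  rewrite (absM H).
  have h1 : abs Q1.[w] * abs (w - u a) <= abs Q1.[u v] * r.
    by apply: ler_pM => //; exact: abs_ge0.
  apply: le_trans h1 _.
  rewrite -(hsep _ _ va) -(absM H).
  have -> : Q1.[u v] * (u v - u a) = Q.[u v] - Q.[u a] by rewrite ev addrK.
  apply: (ultraD H); first by rewrite le_max lexx.
  by rewrite (absN H) le_max lexx orbT.
have [hva|hav] := leP (abs Q.[u v]) (abs Q.[u a]).
  exists a; split; first exact: mem_head.
  by move: key; rewrite /Num.max; case: ifP => _ //; move=> k; apply: le_trans k hva.
exists v; split; first by rewrite in_cons vL orbT.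
apply: le_trans key _; rewrite ge_max lexx /=; exact: ltW.
Qed.

Lemma maxlist (L : seq nat) m : m \in L -> (m <= foldr maxn 0 L)%N.
Proof.
elim: L => [//|a L IH]; rewrite in_cons => /orP[/eqP ->|h] /=.
  exact: leq_maxl.
exact: leq_trans (IH h) (leq_maxr _ _).
Qed.

Lemma argmax_list (R : realType) (f : nat -> R) (L : seq nat) :
  L != [::] -> exists n0, n0 \in L /\ forall n, n \in L -> f n <= f n0.
Proof.
elim: L => [//|a L IH] _.
have [->|Ln] := eqVneq L [::].
  by exists a; split; [exact: mem_head | move=> n; rewrite inE => /eqP ->].
have [n1 [n1L hn1]] := IH Ln.
have [h|h] := leP (f n1) (f a).
  exists a; split; first exact: mem_head.
  move=> n; rewrite in_cons => /orP[/eqP ->//|nL]; exact: le_trans (hn1 _ nL) h.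
exists n1; split; first by rewrite in_cons n1L orbT.
move=> n; rewrite in_cons => /orP[/eqP ->|nL]; [exact: ltW | exact: hn1].
Qed.

Lemma conv_sep (K : fieldType) (R : realType) (abs : K -> R)
  (H : complete_discrete_nonarch_abs abs) (u : nat -> K) z0 r
  (hin : forall n, abs (u n - z0) <= r)
  (hsep : forall m n, m != n -> abs (u m - u n) = r)
  (X : Tball abs) (hX : sval X = cball abs z0 r) :
  converges_for (@weak_open K R abs) (fun n => pt abs (u n)) X.
Proof.
have ev : forall Q : {poly K}, exists N, forall n, (N <= n)%N -> abs Q.[u n] = normQ Q X.
  move=> Q; apply: contrapT => hN.
  have bad : forall N, exists n, (N <= n)%N /\ abs Q.[u n] <> normQ Q X.
    move=> N; apply: contrapT => h; apply: hN; exists N => n hn.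
    apply: contrapT => h'; apply: h; by exists n.
  have lists : forall k, exists L : seq nat, [/\ uniq L, size L = k &
      forall n, n \in L -> abs Q.[u n] <> normQ Q X].
    elim => [|k [L [uL sL bL]]]; first by exists [::].
    have [n [hn bn]] := bad (foldr maxn 0 L).+1.
    exists (n :: L); split => /=; [|by rewrite sL|].
      rewrite uL andbT; apply/negP => /maxlist h; move: hn; rewrite ltnNge h //.
    by move=> m; rewrite in_cons => /orP[/eqP ->//|]; exact: bL.
  have [L [uL sL bL]] := lists (size Q).+1.
  have Ln : L != [::] by apply/eqP => e; move: sL; rewrite e.
  have [n0 [n0L hn0]] := argmax_list (fun n => abs Q.[u n]) Ln.
  apply: (bL n0 n0L).
  rewrite /normQ hX; apply/esym/sup_eq_max; first by exists (u n0) => //; exact: hin.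
  move=> t [w hw <-].
  have := claim H hin hsep uL (ltnW (eq_leq (esym sL) : (size Q < size L)%N)) hw.
  case => [->|[n [nL hn]]]; first by rewrite (abs0 H) abs_ge0.
  exact: le_trans hn (hn0 _ nL).
move=> U hU UX; have [Qs [e [e0 hQ]]] := hU _ UX.
have [N hN] : exists N, forall n, (N <= n)%N -> forall Q, Q \in Qs -> abs Q.[u n] = normQ Q X.
  elim: Qs {hQ} => [|Q Qs [N1 h1]]; first by exists 0%N.
  have [N2 h2] := ev Q.
  exists (maxn N1 N2) => n; rewrite geq_max => /andP[n1 n2] P.
  rewrite in_cons => /orP[/eqP ->|PQ]; [exact: h2 | exact: h1].
exists N => n hn; apply: hQ => Q hQin.
by rewrite (@normQ_pt _ _ _ H Q (pt abs (u n)) (u n) erefl) hN // subrr normr0.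
Qed.

Definition NoSep (K : fieldType) (R : realType) (abs : K -> R) (F : set K) :=
  ~ exists z0 r (u : nat -> K), [/\ 0 < r, radius_set abs r, (forall n, F (u n)),
     (forall n, abs (u n - z0) <= r) & (forall m n, m != n -> abs (u m - u n) = r)].

Lemma TB (K : fieldType) (R : realType) (abs : K -> R)
  (H : complete_discrete_nonarch_abs abs) (F : set K) e (he0 : 0 < e) (he1 : e < 1)
  (hdisc : forall a b, b != 0 -> abs a < abs b -> abs a <= (1 - e) * abs b)
  (NB : NoSep abs F) c rho (rho0 : 0 < rho) :
  exists ws : seq K, (forall w, w \in ws -> F w /\ abs (w - c) <= rho) /\
    forall f, F f -> abs (f - c) <= rho -> exists w, w \in ws /\ abs (f - w) <= (1 - e) * rho.
Proof.
apply: contrapT => hno.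
pose good (ws : seq K) := forall w, w \in ws -> F w /\ abs (w - c) <= rho.
have step : forall ws : seq K, exists f, good ws -> F f /\ abs (f - c) <= rho /\
    forall w, w \in ws -> (1 - e) * rho < abs (f - w).
  move=> ws; case: (classic (good ws)) => g; last by exists 0.
  apply: contrapT => hf; apply: hno; exists ws; split => // f Ff fc.
  apply: contrapT => hw; apply: hf; exists f => _; split => //; split => // w wi.
  rewrite ltNge; apply/negP => h; apply: hw; by exists w.
pose g ws := proj1_sig (cid (step ws)).
have gP : forall ws, good ws -> F (g ws) /\ abs (g ws - c) <= rho /\
    forall w, w \in ws -> (1 - e) * rho < abs (g ws - w).
  by move=> ws; exact: (proj2_sig (cid (step ws))).
pose L n := iter n (fun ws => g ws :: ws) [::].
have goodL : forall n, good (L n).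
  elim => [|n IH] w //=; rewrite in_cons => /orP[/eqP ->|wi].
    by have [? [? _]] := gP _ IH.
  exact: IH.
pose u n := g (L n).
have memL : forall m n, (m < n)%N -> u m \in L n.
  move=> m; elim => [//|n IH]; rewrite ltnS leq_eqVlt => /orP[/eqP ->|h] /=.
    exact: mem_head.
  by rewrite in_cons IH ?orbT.
have Fu : forall n, F (u n) by move=> n; have [? _] := gP _ (goodL n).
have Bu : forall n, abs (u n - c) <= rho by move=> n; have [_ [? _]] := gP _ (goodL n).
have sepu : forall m n, (m < n)%N -> (1 - e) * rho < abs (u n - u m).
  by move=> m n mn; have [_ [_ h]] := gP _ (goodL n); exact: h _ (memL _ _ mn).
have sepu' : forall m n, m != n -> (1 - e) * rho < abs (u m - u n) /\ abs (u m - u n) <= rho.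
  move=> m n mn; split; last by apply: (ultra3 H (Bu m)); rewrite (absB H).
  have [h|h|h] := ltngtP m n; [rewrite (absB H); exact: sepu | exact: sepu | by rewrite h eqxx in mn].
have r0 : 0 < abs (u 0%N - u 1%N).
  have [h _] := sepu' 0%N 1%N isT; apply: le_lt_trans h; apply: mulr_ge0 => //; lra.
have nz : u 0%N - u 1%N != 0 by apply/eqP => h; move: r0; rewrite h (abs0 H) ltxx.
have eqd : forall m n, m != n -> abs (u m - u n) = abs (u 0%N - u 1%N).
  move=> m n mn; have [h1 h2] := sepu' m n mn; have [h3 h4] := sepu' 0%N 1%N isT.
  have mn0 : u m - u n != 0.
    apply/eqP => h; move: h1; rewrite h (abs0 H) => h'.
    have : 0 <= (1 - e) * rho by apply: mulr_ge0 => //; lra.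
    lra.
  have he : 0 <= 1 - e by lra.
  have [h|h|h] := ltgtP (abs (u m - u n)) (abs (u 0%N - u 1%N)) => //.
    by have := lt_le_trans h1 (le_trans (hdisc _ _ nz h) (ler_wpM2l he h4)); rewrite ltxx.
  by have := lt_le_trans h3 (le_trans (hdisc _ _ mn0 h) (ler_wpM2l he h2)); rewrite ltxx.
apply: NB; exists (u 0%N), (abs (u 0%N - u 1%N)), u; split => //.
- by right; exists (u 0%N - u 1%N).
- move=> n; have [->|nn] := eqVneq n 0%N; first by rewrite subrr (abs0 H) ltW.
  by rewrite eqd.
Qed.

Lemma C_is_pt (K : fieldType) (R : realType) (abs : K -> R)
  (H : complete_discrete_nonarch_abs abs) (F : set K) e (he0 : 0 < e) (he1 : e < 1)
  (hdisc : forall a b, b != 0 -> abs a < abs b -> abs a <= (1 - e) * abs b)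
  (NB : NoSep abs F) (y : Tball abs) :
  closure_of (@weak_open K R abs) (pt abs @` F) y -> exists l, sval y = cball abs l 0.
Proof.
move=> hC; case: (svalP y) => z0 [r [[->|[a [an0 ra]]] hy]]; first by exists z0.
exfalso; rewrite -ra in hy.
have a0 := abs_gt0 H an0.
have [ws [wsP wsC]] := TB H he0 he1 hdisc NB z0 a0.
pose Qs := ('X - z0%:P) :: map (fun w => 'X - w%:P) ws.
have ea : 0 < e * abs a by apply: mulr_gt0.
have [y' [[f Ff <-] hf]] := hC _ (@basic_open _ _ abs Qs y (e * abs a))
   (fun Q _ => ltac:(by rewrite subrr normr0)).
have nf : forall c, normQ ('X - c%:P) (pt abs f) = abs (f - c).
  by move=> c; rewrite (@normQ_pt _ _ _ H _ (pt abs f) f erefl) hornerXsubC.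
have h0 := hf _ (mem_head _ _).
rewrite nf (normQ_X H hy) in h0; last by rewrite subrr (abs0 H) ltW.
move: h0; rewrite ltr_norml => /andP[h0l h0r].
have [fin|fout] := leP (abs (f - z0)) (abs a).
  have [w [wi hw]] := wsC f Ff fin.
  have hQ : 'X - w%:P \in Qs by rewrite /Qs in_cons (map_f (fun w => 'X - w%:P) wi) orbT.
  have := hf _ hQ.
  rewrite nf (normQ_X H hy); last by have [_ ?] := wsP w wi.
  rewrite ltr_norml => /andP[h1 _].
  have : (1 - e) * abs a = abs a - e * abs a by ring.
  lra.
have fz : f - z0 != 0 by apply/eqP => h; move: fout; rewrite h (abs0 H) ltNge ltW.
have := hdisc _ _ fz fout.
have : e * abs a <= e * abs (f - z0) by apply: ler_wpM2l; [exact: ltW | exact: ltW].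
nra.
Qed.

Lemma cover_list (T I : Type) (W : eqType) (U : I -> set T) (A : W -> set T) (ws : seq W) :
  (forall w, w \in ws -> exists D, finite_set D /\ A w `<=` \bigcup_(i in D) U i) ->
  exists D, finite_set D /\ forall w, w \in ws -> A w `<=` \bigcup_(i in D) U i.
Proof.
elim: ws => [|a ws IH] h; first by exists set0; split => //; exact: finite_set0.
have [D1 [f1 h1]] := h a (mem_head _ _).
have [D2 [f2 h2]] := IH (fun w wi => h w (ltac:(by rewrite in_cons wi orbT))).
exists (D1 `|` D2); split; first by rewrite finite_setU.
move=> w; rewrite in_cons => /orP[/eqP ->|wi] y Ay.
  by have [i Di Ui] := h1 _ Ay; exists i => //; left.
by have [i Di Ui] := h2 _ wi _ Ay; exists i => //; right.
Qed.

Lemma compact_B (K : fieldType) (R : realType) (abs : K -> R)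
  (H : complete_discrete_nonarch_abs abs) (F : set K) e (he0 : 0 < e) (he1 : e < 1)
  (hdisc : forall a b, b != 0 -> abs a < abs b -> abs a <= (1 - e) * abs b)
  (NB : NoSep abs F) c0 (Fc0 : F c0) M (hM : forall z, F z -> abs z <= M) :
  compact_for (@strong_open K R abs) (closure_of (@weak_open K R abs) (pt abs @` F)).
Proof.
set C := closure_of _ _.
move=> I U hop hcov; apply: contrapT => hno.
pose Cpart c (rho : R) := [set y : Tball abs | C y /\
   exists l, sval y = cball abs l 0 /\ abs (l - c) <= rho].
pose P c rho := ~ exists D : set I, finite_set D /\ Cpart c rho `<=` \bigcup_(i in D) U i.
have M0 : 0 <= M by apply: le_trans (hM _ Fc0); exact: abs_ge0.
pose rho0 := M + 1.
have rho00 : 0 < rho0 by rewrite /rho0; lra.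
have P0 : P c0 rho0.
  move=> [D [fD hD]]; apply: hno; exists D; split => // y Cy.
  have [l hl] := C_is_pt H he0 he1 hdisc NB Cy.
  apply: hD; split => //; exists l; split => //.
  have [f [Ff hf]] := C_pt_Fbar H Cy hl rho00.
  apply: (ultra3 H (y := f)); first by rewrite (absB H); exact: ltW.
  apply: (ultraD H).
    by apply: le_trans (hM _ Ff) _; rewrite /rho0; lra.
  by rewrite (absN H); apply: le_trans (hM _ Fc0) _; rewrite /rho0; lra.
have stepP : forall c rho, 0 < rho -> P c rho ->
    exists w, F w /\ abs (w - c) <= rho /\ P w ((1 - e) * rho).
  move=> c rho rho0' Pc; apply: contrapT => hn.
  have [ws [wsP wsC]] := TB H he0 he1 hdisc NB c rho0'.
  have hws : forall w, w \in ws -> exists D, finite_set D /\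
      Cpart w ((1 - e) * rho) `<=` \bigcup_(i in D) U i.
    move=> w wi; apply: contrapT => hD; apply: hn; exists w.
    by have [Fw bw] := wsP w wi; split => //; split.
  have [D [fD hD]] := cover_list hws.
  apply: Pc; exists D; split => // y [Cy [l [hl lc]]].
  have rp : 0 < (1 - e) * rho by apply: mulr_gt0 => //; lra.
  have rle : (1 - e) * rho <= rho.
    by rewrite mulrBl mul1r; have := mulr_gt0 he0 rho0'; lra.
  have [f [Ff hf]] := C_pt_Fbar H Cy hl rp.
  have fc : abs (f - c) <= rho.
    by apply: (ultra3 H (y := l)) lc; exact: le_trans (ltW hf) rle.
  have [w [wi hw]] := wsC f Ff fc.
  apply: (hD w wi); split => //; exists l; split => //.
  by apply: (ultra3 H (y := f)) hw; rewrite (absB H); exact: ltW.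
pose rho n := (1 - e) ^+ n * rho0.
have rhoS n : rho n.+1 = (1 - e) * rho n by rewrite /rho exprS mulrA.
have rho_gt0 n : 0 < rho n by apply: mulr_gt0 => //; apply: exprn_gt0; lra.
have step' : forall n c, exists w, P c (rho n) ->
    F w /\ abs (w - c) <= rho n /\ P w (rho n.+1).
  move=> n c; case: (classic (P c (rho n))) => h; last by exists c.
  have [w [Fw [bw Pw]]] := stepP c (rho n) (rho_gt0 n) h.
  by exists w => _; rewrite rhoS.
pose g n c := proj1_sig (cid (step' n c)).
have gP : forall n c, P c (rho n) ->
    F (g n c) /\ abs (g n c - c) <= rho n /\ P (g n c) (rho n.+1).
  by move=> n c; exact: (proj2_sig (cid (step' n c))).
pose cs n := iteri n g c0.
have csP : forall n, P (cs n) (rho n) /\ F (cs n).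
  elim => [|n [Pn Fn]]; first by rewrite /rho expr0 mul1r.
  by have [h1 [_ h3]] := gP n _ Pn; split.
have csS n : abs (cs n.+1 - cs n) <= rho n.
  by have [_ [h _]] := gP n _ (csP n).1.
have rho_mono : forall n k, rho (n + k)%N <= rho n.
  move=> n; elim => [|k IH]; first by rewrite addn0.
  rewrite addnS rhoS; apply: le_trans IH.
  by rewrite mulrBl mul1r; have := mulr_gt0 he0 (rho_gt0 (n + k)%N); lra.
have nest : forall n k, abs (cs (n + k)%N - cs n) <= rho n.
  move=> n; elim => [|k IH]; first by rewrite addn0 subrr (abs0 H) ltW.
  rewrite addnS; apply: (ultra3 H (y := cs (n + k)%N)) IH.
  exact: le_trans (csS _) (rho_mono n k).
have nest' : forall n m, (n <= m)%N -> abs (cs m - cs n) <= rho n.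
  by move=> n m nm; rewrite -(subnKC nm); exact: nest.
have rho_small : forall eps, 0 < eps -> exists n, rho n < eps.
  move=> eps eps0.
  have bnd : forall n, rho n * (1 + n%:R * e) <= rho0.
    elim => [|n IH]; first by rewrite /rho expr0 mul1r mul0r addr0 mulr1.
    rewrite rhoS -natr1.
    have h1 := rho_gt0 n; have h2 := ler0n R n.
    have : 0 <= rho n * (e * e) * (n%:R + 1).
      by apply: mulr_ge0; [apply: mulr_ge0; [lra|apply: mulr_ge0; lra] | lra].
    lra.
  have q0 : 0 <= rho0 / (e * eps) by apply: divr_ge0; [lra | apply: mulr_ge0; lra].
  have hb := archi_boundP q0.
  set n := Num.bound _ in hb.
  exists n.
  have h1 : rho0 < n%:R * (e * eps) by rewrite -ltr_pdivrMr // mulr_gt0.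
  have h2 := bnd n; have h3 := ler0n R n.
  rewrite ltNge; apply/negP => h.
  have h4 : 0 <= 1 + n%:R * e by apply: addr_ge0 => //; apply: mulr_ge0 => //; lra.
  have := ler_wpM2r h4 h.
  lra.
have Cauchy : forall eps : R, 0 < eps -> exists N, forall m n, (N <= m)%N -> (N <= n)%N ->
    abs (cs m - cs n) < eps.
  move=> eps e0; have [N hN] := rho_small eps e0; exists N => m n hm hn.
  apply: le_lt_trans hN; apply: (ultra3 H (y := cs N)); first exact: nest'.
  by rewrite (absB H); exact: nest'.
have [l hl] := abs_complete H Cauchy.
have lc : forall n, abs (l - cs n) <= rho n.
  move=> n; have [N hN] := hl _ (rho_gt0 n); apply: (ultra3 H (y := cs (maxn N n))).
    by rewrite (absB H); exact: ltW (hN _ (leq_maxl _ _)).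
  exact: nest' _ _ (leq_maxr _ _).
have Cl : C (pt abs l).
  apply: (@Fbar_in_C _ _ _ H F l) => eps e0; have [n hn] := rho_small _ e0.
  exists (cs n); split; first exact: (csP n).2.
  by rewrite (absB H); exact: le_lt_trans (lc n) hn.
have [i _ Ui] := hcov _ Cl.
have [d [d0 hd]] := hop i _ Ui.
have [n hn] := rho_small _ d0.
apply: (csP n).1; exists [set i]; split; first exact: finite_set1.
move=> y [Cy [l' [hl' l'c]]]; exists i => //; apply: hd.
rewrite (@dist_pt _ _ _ H (pt abs l) y l l' erefl hl').
apply: le_lt_trans hn; apply: (ultra3 H (y := cs n)) (lc n) _.
by rewrite (absB H).
Qed.

Unset Implicit Arguments.

Theorem proposition1p3 (K : fieldType) (R : realType) (abs : K -> R)
  (Habs : complete_discrete_nonarch_abs abs) (F : set K)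
  (Fbounded : exists M : R, forall z, F z -> abs z <= M)
  (Finf : infinite_set F) :
  compact_for ((@strong_open K R abs)) (closure_of ((@weak_open K R abs)) ((@pt K R abs) @` F))
  \/
  exists (x : (@Tball K R abs)) (z0 : K) (r : R),
    0 < r /\ (@radius_set K R abs) r /\ sval x = (@cball K R abs) z0 r /\
    exists u : nat -> K, injective u /\ (forall n, F (u n)) /\
      (forall n, sval x (u n)) /\
      converges_for ((@weak_open K R abs)) (fun n => (@pt K R abs) (u n)) x.
Proof.
have [e [he0 [he1 hdisc]]] := abs_disc Habs.
case: (classic (NoSep abs F)) => NB.
  left.
  have [c0 Fc0] : exists c, F c.
    apply: contrapT => h; apply: Finf.
    have -> : F = set0 by apply/seteqP; split => // z Fz; apply: h; exists z.
    exact: finite_set0.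
  have [M hM] := Fbounded.
  exact: (compact_B Habs he0 he1 hdisc NB Fc0 hM).
right.
have [z0 [r [u [r0 rr Fu hin hsep]]]] := contrapT NB.
pose x : Tball abs := exist _ (cball abs z0 r)
  (ex_intro _ z0 (ex_intro _ r (conj rr erefl))).
exists x, z0, r; split => //; split => //; split => //.
exists u; split.
  move=> m n umn; apply/eqP; apply: contrapT => /negP mn.
  have := hsep _ _ mn; rewrite umn subrr (abs0 Habs) => h.
  by move: r0; rewrite -h ltxx.
split => //; split => //.
exact: (@conv_sep _ _ _ Habs u z0 r hin hsep x erefl).
Qed.
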